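(* Let $\varrho\ge1$ and $K\ge 4\varrho+1$ be integers, and consider a configuration satisfying $WU_0$ (for clocks with values in $\{0,\dots,K-1\}$). Let $p,q$ be processes with $d(p,q)\le 2\varrho$, and let $a=p.r$, $b=q.r$. Then the intrinsic delay satisfies $\delta_{(p,q)}=\overline{b-a}$ if $0\le\overline{b-a}\le 2\varrho$, and $\delta_{(p,q)}=-\overline{a-b}$ otherwise.
   Context: Let $G=(V,E)$ be a finite connected undirected graph with hop distance $d$. For an integer $a$, $\bar a\in\{0,\dots,K-1\}$ is its residue modulo $K$. Each process $p$ holds a clock $p.r\in\{0,\dots,K-1\}$. Integers $a,b$ are locally comparable if $\min(\overline{a-b},\overline{b-a})\le1$, and then $b\ominus a=\overline{b-a}$ if $\overline{b-a}\le1$, and $b\ominus a=-\overline{a-b}$ otherwise. A configuration satisfies $WU$ if for every edge $\{p,q\}$, $p.r$ and $q.r$ are locally comparable. The delay of a path $\mu=p_0p_1\ldots p_k$ is $\delta_\mu=\sum_{i=0}^{k-1}(p_{i+1}.r\ominus p_i.r)$ ($0$ if $k=0$). A configuration satisfies $WU_0$ if it satisfies $WU$ and for all $p,q$ all paths from $p$ to $q$ have the same delay, denoted $\delta_{(p,q)}$ (the intrinsic delay). *)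

(* Defs.v *)
From mathcomp Require Import all_boot all_order all_algebra.
Set Implicit Arguments. Unset Strict Implicit. Unset Printing Implicit Defensive.
Import Order.TTheory GRing.Theory Num.Theory.
Local Open Scope ring_scope.

Definition res (K : nat) (a : int) : int := (a %% K%:Z)%Z.

Definition loc_comp (K : nat) (a b : int) : bool :=
  (res K (a - b) <= 1) || (res K (b - a) <= 1).

Definition ominus (K : nat) (b a : int) : int :=
  if res K (b - a) <= 1 then res K (b - a) else - res K (a - b).

Definition clk (V : Type) (K : nat) (r : V -> 'I_K) (p : V) : int := (nat_of_ord (r p))%:Z.

Definition WU (V : Type) (e : rel V) (K : nat) (r : V -> 'I_K) : Prop :=
  forall p q, e p q -> loc_comp K (clk r p) (clk r q).

Fixpoint delay (V : Type) (K : nat) (r : V -> 'I_K) (x : V) (s : seq V) : int :=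
  match s with
  | [::] => 0
  | y :: s' => ominus K (clk r y) (clk r x) + delay r y s'
  end.

Definition is_path (V : eqType) (e : rel V) (x y : V) (s : seq V) : bool :=
  path e x s && (last x s == y).

Definition WU0 (V : eqType) (e : rel V) (K : nat) (r : V -> 'I_K) : Prop :=
  WU e r /\
  forall p q s1 s2, is_path e p q s1 -> is_path e p q s2 ->
    delay r p s1 = delay r p s2.

(* hop distance d(p,q) <= k: there is a path from p to q with at most k edges *)
Definition dist_le (V : eqType) (e : rel V) (k : nat) (p q : V) : Prop :=
  exists s, is_path e p q s /\ (size s <= k)%N.

(* Main.v *)
Require Import Defs.
From mathcomp Require Import all_boot all_order all_algebra.
Import Order.TTheory GRing.Theory Num.Theory.
Local Open Scope ring_scope.

Lemma resE K t : res K t = t - (t %/ K%:Z)%Z * K%:Z.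
Proof. rewrite /res {2}(divz_eq t K%:Z); by rewrite addrC addKr. Qed.

Lemma res_bounds K t : (0 < K)%N -> 0 <= res K t < K%:Z.
Proof.
move=> K0; rewrite /res modz_ge0 ?ltz_pmod // ?ltz_nat //; by rewrite eqz_nat -lt0n.
Qed.

Lemma ominus_prop K y z : (0 < K)%N -> loc_comp K z y ->
  -1 <= ominus K y z <= 1 /\ exists m, ominus K y z = y - z + m * K%:Z.
Proof.
move=> K0; rewrite /loc_comp /ominus => H.
case: ifP => h1.
  have := res_bounds K (y - z) K0 => /andP[h0 _].
  split; first by rewrite h1 andbT (le_trans _ h0).
  exists (- ((y - z) %/ K%:Z)%Z); rewrite resE mulNr //.
have h2 : res K (z - y) <= 1 by move: H; rewrite h1 orbF.
have := res_bounds K (z - y) K0 => /andP[h0 _].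
split; first by rewrite lerN2 h2 /= lerNl (le_trans _ h0).
exists ((z - y) %/ K%:Z)%Z; rewrite resE opprB opprB.
by rewrite addrC.
Qed.

Lemma delay_prop (V : eqType) (e : rel V) K (r : V -> 'I_K) :
  (0 < K)%N -> WU e r -> forall s x, path e x s ->
  `|delay r x s| <= (size s)%:R /\
  exists m, delay r x s = clk r (last x s) - clk r x + m * K%:Z.
Proof.
move=> K0 hW; elim=> [|y s IH] x /=.
  by move=> _; split => //; exists 0; rewrite mul0r addr0 subrr.
move=> /andP[exy hp]; have [hb [m hm]] := IH _ hp.
have [/andP[o1 o2] [n hn]] := ominus_prop K (clk r y) (clk r x) K0 (hW _ _ exy).
split.
  apply: le_trans (ler_normD _ _) _.
  rewrite -addn1 natrD addrC lerD //.
  by rewrite ler_norml o1 o2.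
exists (n + m); rewrite hn hm mulrDl.
rewrite addrACA; congr (_ + _); by rewrite addrC addrA subrK.
Qed.

Theorem mainTheorem7 (V : finType) (e : rel V)
    (e_sym : symmetric e) (e_irr : irreflexive e)
    (e_conn : forall p q : V, connect e p q)
    (rho K : nat) (rho_ge1 : (1 <= rho)%N) (K_ge : (4 * rho + 1 <= K)%N)
    (r : V -> 'I_K) (hWU0 : WU0 e r)
    (p q : V) (hd : dist_le e (2 * rho) p q) :
  let a := clk r p in
  let b := clk r q in
  forall s, is_path e p q s ->
    delay r p s =
      (if (0 <= res K (b - a)) && (res K (b - a) <= (2 * rho)%:Z)
       then res K (b - a) else - res K (a - b)).
Proof.
move=> a b s hs.
have K0 : (0 < K)%N by apply: leq_trans K_ge; rewrite addn1.
case: hWU0 => hW hsame.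
case: hd => s0 [hs0 hsz].
rewrite (hsame _ _ _ _ hs hs0).
move: (hs0) => /andP[hp /eqP hl].
have [hb [m hm]] := @delay_prop V e K r K0 hW _ _ hp.
rewrite hl -/a -/b in hm.
set D := delay r p s0 in hb hm *.
set R := (2 * rho)%:Z.
have hK : R + R + 1 <= K%:Z.
  rewrite /R -[1]/(Posz 1) -!PoszD -mulnDl; exact: K_ge.
have hDR : `|D| <= R.
  by apply: le_trans hb _; rewrite /R natz; exact: hsz.
move: hDR; rewrite ler_norml => /andP[hD1 hD2].
have hRK : R < K%:Z.
  apply: lt_le_trans hK; rewrite -addrA ltrDl; apply: (lt_le_trans ltr01).
  by apply: ler_wpDl.
have eba : b - a = - m * K%:Z + D by rewrite hm mulNr [b - a + _]addrC addKr.
have eab : a - b = m * K%:Z + - D by rewrite hm opprD addrCA subrr addr0 opprB.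
rewrite /res eba eab !modzMDl.
have [hD0 | hD0] := leP 0 D.
  rewrite modz_small ?hD0 ?hD2 //=; exact: le_lt_trans hD2 hRK.
rewrite -(modzDl D K%:Z) modz_small; last first.
  apply/andP; split.
    by rewrite -lerBlDr sub0r (le_trans _ (ltW hRK)) // lerNl.
  by rewrite gtrDl.
have hgt : R < K%:Z + D.
  apply: (lt_le_trans _ (lerD (lexx (K%:Z)) hD1)).
  by rewrite ltrBrDr; apply: lt_le_trans hK; rewrite ltrDl.
rewrite (leNgt (K%:Z + D) R) hgt andbF.
rewrite modz_small ?opprK //.
rewrite oppr_ge0 (ltW hD0) /=.
by apply: le_lt_trans hRK; rewrite lerNl.
Qed.
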